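(* Consider Model A with $\delta>-1$. There exists a constant $C>0$ such that, as $n\to\infty$, $$\mathbf P\Bigl(\max_{k}\bigl|N_{>k}(n)-np_{>k}\bigr|\ge C\bigl(1+\sqrt{n\log n}\bigr)\Bigr)=o(1).$$
   Context: Model A (with $\delta>-1$): $G(1)$ consists of a single node $v_1$ with a self loop (so $v_1$ has degree 2; a self loop contributes 2 to the degree). For $n\ge1$, given $G(n)$ (nodes $v_1,\dots,v_n$, $n$ edges), $G(n+1)$ is obtained by adding a new node $v_{n+1}$ and one edge joining $v_{n+1}$ to an existing node $v_i$, $1\le i\le n$, chosen with probability $\frac{D_i(n)+\delta}{(2+\delta)n}$, where $D_i(n)$ is the degree of $v_i$ in $G(n)$. $N_{>k}(n):=\#\{1\le i\le n: D_i(n)>k\}$ for $k\ge1$, $N_{>0}(n):=n$. For $k\ge0$, $$p_{>k}:=\frac{\Gamma(k+1+\delta)\,\Gamma(3+2\delta)}{\Gamma(k+3+2\delta)\,\Gamma(1+\delta)}.$$ *)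

(* Defs.v *)
(* Model A preferential attachment, as an explicit finite
   probability space over attachment-choice sequences. *)
From Stdlib Require Import Reals Lra Lia Arith List ClassicalEpsilon.
Import ListNotations.
Open Scope R_scope.

(* Nodes are 0-indexed: node i here is v_{i+1} in the paper.
   A history of G(n) is a list s of length n-1; its m-th entry (0-based)
   is the node to which v_{m+2} attached when passing from G(m+1) to G(m+2);
   it lies in {0,...,m}. *)
Fixpoint histories (n : nat) : list (list nat) :=
  match n with
  | O => [ [] ]
  | S m => flat_map (fun s => map (fun c => s ++ [c]) (seq 0 (S m))) (histories m)
  end.

(* Degree of node i in the graph with history s:
   node 0 carries a self loop (degree 2), every other node has one edge to
   its target; plus one for each later node attaching to it. *)
Definition deg (s : list nat) (i : nat) : nat :=
  (if Nat.eqb i 0 then 2 else 1) + count_occ Nat.eq_dec s i.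

(* Probability of history s: product of the attachment probabilities
   (D_i(m)+delta)/((2+delta) m) at each step from G(m) to G(m+1). *)
Fixpoint wt_aux (delta : R) (pre rest : list nat) : R :=
  match rest with
  | [] => 1
  | c :: r => (INR (deg pre c) + delta) / ((2 + delta) * INR (S (length pre)))
              * wt_aux delta (pre ++ [c]) r
  end.

Definition weight (delta : R) (s : list nat) : R := wt_aux delta [] s.

(* Probability, in Model A, that G(N) satisfies the event E (given as a
   predicate on histories of G(N)), for N >= 1. *)
Definition probA (delta : R) (N : nat) (E : list nat -> Prop) : R :=
  fold_right Rplus 0
    (map (fun s => if excluded_middle_informative (E s) then weight delta s else 0)
         (histories (N - 1))).

Definition Ngt (s : list nat) (k : nat) : nat :=
  length (filter (fun i => Nat.ltb k (deg s i)) (seq 0 (S (length s)))).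

(* p_{>k} = Gamma(k+1+d)Gamma(3+2d)/(Gamma(k+3+2d)Gamma(1+d)),
   written via Gamma(x+k)/Gamma(x) = prod_{j<k} (x+j). *)
Fixpoint pgt (delta : R) (k : nat) : R :=
  match k with
  | O => 1
  | S j => pgt delta j * ((1 + delta + INR j) / (3 + 2 * delta + INR j))
  end.

(* Main.v *)
Require Import Defs.
From Stdlib Require Import Reals List.
From Stdlib Require Import Lra Lia Arith ClassicalEpsilon.
Import ListNotations.
Open Scope R_scope.

Definition lsum {A : Type} (f : A -> R) (l : list A) : R := fold_right Rplus 0 (map f l).

Lemma lsum_nil {A} (f : A -> R) : lsum f [] = 0.
Proof. reflexivity. Qed.
Lemma lsum_cons {A} (f : A -> R) x l : lsum f (x :: l) = f x + lsum f l.
Proof. reflexivity. Qed.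
Lemma lsum_app {A} (f : A -> R) l1 l2 : lsum f (l1 ++ l2) = lsum f l1 + lsum f l2.
Proof. induction l1; [unfold lsum; simpl; ring|]. rewrite <- app_comm_cons, !lsum_cons, IHl1; ring. Qed.
Lemma lsum_ext_in {A} (f g : A -> R) l : (forall x, In x l -> f x = g x) -> lsum f l = lsum g l.
Proof. induction l; intros H; [reflexivity|]. rewrite !lsum_cons. f_equal.
  - apply H; simpl; auto.
  - apply IHl; intros; apply H; simpl; auto. Qed.
Lemma lsum_le_in {A} (f g : A -> R) l : (forall x, In x l -> f x <= g x) -> lsum f l <= lsum g l.
Proof. induction l; intros H; [unfold lsum; simpl; lra|]. rewrite !lsum_cons.
  assert (f a <= g a) by (apply H; simpl; auto).
  assert (lsum f l <= lsum g l) by (apply IHl; intros; apply H; simpl; auto). lra. Qed.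
Lemma lsum_nonneg {A} (f : A -> R) l : (forall x, In x l -> 0 <= f x) -> 0 <= lsum f l.
Proof. intros H. assert (lsum (fun _ => 0) l = 0) as E.
  { induction l; [reflexivity|]. rewrite lsum_cons, IHl; [ring|]. intros; apply H; simpl; auto. }
  rewrite <- E. apply lsum_le_in. auto. Qed.
Lemma lsum_scal {A} (c : R) (f : A -> R) l : lsum (fun x => c * f x) l = c * lsum f l.
Proof. induction l; [unfold lsum; simpl; ring|]. rewrite !lsum_cons, IHl; ring. Qed.
Lemma lsum_plus {A} (f g : A -> R) l : lsum (fun x => f x + g x) l = lsum f l + lsum g l.
Proof. induction l; [unfold lsum; simpl; ring|]. rewrite !lsum_cons, IHl; ring. Qed.
Lemma lsum_const {A} (c : R) l : lsum (fun _ : A => c) l = c * INR (length l).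
Proof. induction l; [unfold lsum; simpl; ring|]. rewrite lsum_cons, IHl. simpl length. rewrite S_INR; ring. Qed.
Lemma lsum_flat_map {A B} (f : B -> R) (g : A -> list B) l :
  lsum f (flat_map g l) = lsum (fun x => lsum f (g x)) l.
Proof. induction l; [reflexivity|]. simpl. rewrite lsum_app, lsum_cons, IHl; reflexivity. Qed.
Lemma lsum_map {A B} (f : B -> R) (h : A -> B) l : lsum f (map h l) = lsum (fun x => f (h x)) l.
Proof. unfold lsum. rewrite map_map. reflexivity. Qed.
Lemma lsum_swap {A B} (w : A -> R) (F : A -> B -> R) (C : list A) (L : list B) :
  lsum (fun c => w c * lsum (fun k => F c k) L) C = lsum (fun k => lsum (fun c => w c * F c k) C) L.
Proof. induction L.
  - unfold lsum; simpl. induction C; simpl; [ring|]. rewrite IHC; ring.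
  - rewrite lsum_cons. rewrite <- IHL. rewrite <- lsum_plus. apply lsum_ext_in; intros. rewrite lsum_cons; ring. Qed.
Lemma lsum_term_le {A} (f : A -> R) l x : (forall y, In y l -> 0 <= f y) -> In x l -> f x <= lsum f l.
Proof. induction l; intros H Hin; [destruct Hin|]. rewrite lsum_cons. destruct Hin as [<-|Hin].
  - assert (0 <= lsum f l) by (apply lsum_nonneg; intros; apply H; simpl; auto). lra.
  - assert (0 <= f a) by (apply H; simpl; auto). assert (f x <= lsum f l) by (apply IHl; auto; intros; apply H; simpl; auto). lra. Qed.

Lemma Rabs_le_inv x b : Rabs x <= b -> -b <= x <= b.
Proof. unfold Rabs; destruct (Rcase_abs x); lra. Qed.
Lemma Rdiv_le_l a b c : 0 < b -> a <= c * b -> a / b <= c.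
Proof. intros. apply (Rmult_le_reg_r b); auto. unfold Rdiv. rewrite Rmult_assoc, Rinv_l by lra. lra. Qed.
Lemma exp_mono x y : x <= y -> exp x <= exp y.
Proof. intros H; destruct (Rle_lt_or_eq_dec _ _ H) as [h|h]; [left; apply exp_increasing; auto| subst; lra]. Qed.

Lemma exp_le_inv x : x < 1 -> exp x <= / (1 - x).
Proof. intros H. assert (1 - x <= exp (-x)) by (pose proof (exp_ineq1_le (-x)); lra).
  rewrite exp_Ropp in H0. assert (0 < exp x) by apply exp_pos.
  apply (Rmult_le_reg_l (1 - x)); [lra|]. rewrite Rinv_r by lra.
  apply (Rmult_le_reg_r (/ exp x)); [apply Rinv_0_lt_compat; auto|]. rewrite Rmult_1_l, Rmult_assoc, Rinv_r by lra. lra. Qed.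

Lemma exp_quad x : Rabs x <= /2 -> exp x <= 1 + x + 2 * x * x.
Proof. intros H. apply Rabs_le_inv in H. eapply Rle_trans; [apply exp_le_inv; lra|].
  apply (Rmult_le_reg_l (1 - x)); [lra|]. rewrite Rinv_r by lra. nra. Qed.

Lemma exp_lin x : 0 <= x <= /2 -> exp x <= 1 + 2 * x.
Proof. intros H. eapply Rle_trans; [apply exp_le_inv; lra|].
  apply (Rmult_le_reg_l (1 - x)); [lra|]. rewrite Rinv_r by lra. nra. Qed.

Lemma exp_convex a x y : 0 <= a <= 1 -> exp ((1 - a) * x + a * y) <= (1 - a) * exp x + a * exp y.
Proof. intros H. set (m := (1 - a) * x + a * y).
  assert (exp x = exp m * exp (x - m)) by (rewrite <- exp_plus; f_equal; ring).
  assert (exp y = exp m * exp (y - m)) by (rewrite <- exp_plus; f_equal; ring).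
  pose proof (exp_ineq1_le (x - m)). pose proof (exp_ineq1_le (y - m)). pose proof (exp_pos m).
  rewrite H0, H1.
  assert ((1 - a) * (exp m * exp (x - m)) + a * (exp m * exp (y - m)) = exp m * ((1-a) * exp (x - m) + a * exp (y - m))) by ring.
  rewrite H5. assert (1 <= (1-a) * exp (x - m) + a * exp (y - m)).
  { assert ((1-a) * (1 + (x - m)) + a * (1 + (y - m)) = 1) by (unfold m; ring). nra. }
  nra. Qed.

Lemma noise {A} (w d : A -> R) (l : list A) (th : R) :
  (forall c, In c l -> 0 <= w c) -> lsum w l = 1 ->
  (forall c, In c l -> -1 <= d c <= 1) -> Rabs th <= /2 ->
  lsum (fun c => w c * exp (th * d c)) l <= exp (4 * th * th) * exp (th * lsum (fun c => w c * d c) l).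
Proof. intros Hw H1 Hd Hth.
  set (mu := lsum (fun c => w c * d c) l).
  assert (Hmu : -1 <= mu <= 1).
  { split.
    - assert (lsum (fun c => - w c) l <= mu). { apply lsum_le_in; intros. specialize (Hw x H). specialize (Hd x H). nra. }
      replace (lsum (fun c => - w c) l) with (-1 * lsum w l) in H by (rewrite <- lsum_scal; apply lsum_ext_in; intros; ring). lra.
    - assert (mu <= lsum w l). { apply lsum_le_in; intros. specialize (Hw x H). specialize (Hd x H). nra. } lra. }
  assert (lsum (fun c => w c * exp (th * d c)) l <= lsum (fun c => w c + th * (w c * d c) + 2 * th * th * w c) l).
  { apply lsum_le_in; intros c Hc. specialize (Hw c Hc). specialize (Hd c Hc).
    assert (Rabs (th * d c) <= /2). { rewrite Rabs_mult.
      assert (Rabs (d c) <= 1) by (apply Rabs_le; lra). pose proof (Rabs_pos th). pose proof (Rabs_pos (d c)).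
      nra. }
    pose proof (exp_quad _ H). assert (th * d c * (th * d c) <= th * th). { assert (d c * d c <= 1) by nra. nra. }
    nra. }
  rewrite !lsum_plus, !lsum_scal in H. fold mu in H. rewrite H1 in H.
  assert (Hth2 : -(/2) <= th <= /2) by (apply Rabs_le_inv; auto).
  pose proof (exp_ineq1_le (th * mu)). pose proof (exp_ineq1_le (4 * th * th)).
  assert (th * mu >= -(/2)) by nra.
  assert (0 <= th * th) by nra.
  assert (exp (th * mu) * (1 + 4 * th * th) <= exp (th * mu) * exp (4 * th * th)).
  { apply Rmult_le_compat_l; [left; apply exp_pos| lra]. }
  nra. Qed.


Definition valid (s : list nat) := forall x, In x s -> (x < S (length s))%nat.

Lemma hist_S m : histories (S m) = flat_map (fun s => map (fun c => s ++ [c]) (seq 0 (S m))) (histories m).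
Proof. reflexivity. Qed.

Lemma hist_valid m s : In s (histories m) -> length s = m /\ valid s.
Proof.
  revert s; induction m; intros s H.
  - simpl in H. destruct H as [<-|[]]. split; [reflexivity|]. intros x [].
  - rewrite hist_S in H. apply in_flat_map in H. destruct H as [s0 [H0 H1]].
    apply in_map_iff in H1. destruct H1 as [c [<- Hc]]. apply in_seq in Hc.
    destruct (IHm s0 H0) as [Hl Hv]. rewrite length_app. simpl. split; [lia|].
    intros x Hx. rewrite length_app; simpl. apply in_app_or in Hx. destruct Hx as [Hx|[<-|[]]].
    + specialize (Hv x Hx). lia.
    + lia.
Qed.

Lemma wt_aux_snoc delta pre r c :
  wt_aux delta pre (r ++ [c]) = wt_aux delta pre r *
    ((INR (deg (pre ++ r) c) + delta) / ((2 + delta) * INR (S (length (pre ++ r))))).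
Proof.
  revert pre; induction r; intros pre.
  - simpl. rewrite app_nil_r. ring.
  - simpl. rewrite IHr. rewrite <- app_assoc. simpl. ring.
Qed.

Definition Pr delta s c := (INR (deg s c) + delta) / ((2 + delta) * INR (S (length s))).

Lemma deg_ge1 s i : (1 <= deg s i)%nat.
Proof. unfold deg. destruct (Nat.eqb i 0); lia. Qed.

Lemma count_occ_le l x : (count_occ Nat.eq_dec l x <= length l)%nat.
Proof. induction l; simpl; [lia|]. destruct (Nat.eq_dec a x); lia. Qed.

Lemma deg_le s i : (deg s i <= 2 + length s)%nat.
Proof. unfold deg. pose proof (count_occ_le s i). destruct (Nat.eqb i 0); lia. Qed.

Lemma Pr_pos delta s c : -1 < delta -> 0 < Pr delta s c.
Proof. intros H. unfold Pr. pose proof (deg_ge1 s c). apply le_INR in H0. simpl in H0.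
  pose proof (pos_INR (length s)). rewrite S_INR. apply Rdiv_lt_0_compat; nra. Qed.

Lemma wt_aux_nonneg delta pre r : -1 < delta -> 0 <= wt_aux delta pre r.
Proof. intros H; revert pre; induction r; intros pre; cbn [wt_aux]; [lra|].
  pose proof (Pr_pos delta pre a H). unfold Pr in H0. apply Rmult_le_pos; [lra|apply IHr]. Qed.

Lemma weight_nonneg delta s : -1 < delta -> 0 <= weight delta s.
Proof. apply wt_aux_nonneg. Qed.

Lemma weight_snoc delta s c : weight delta (s ++ [c]) = weight delta s * Pr delta s c.
Proof. unfold weight. rewrite wt_aux_snoc. reflexivity. Qed.

Definition Ex delta m (F : list nat -> R) := lsum (fun s => weight delta s * F s) (histories m).

Lemma Ex_step delta m F :
  Ex delta (S m) F = Ex delta m (fun s => lsum (fun c => Pr delta s c * F (s ++ [c])) (seq 0 (S m))).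
Proof.
  unfold Ex. rewrite hist_S. rewrite lsum_flat_map. apply lsum_ext_in; intros s _.
  rewrite lsum_map. rewrite <- lsum_scal. apply lsum_ext_in; intros c _. rewrite weight_snoc. ring.
Qed.

Lemma Ex_mono delta m F G : -1 < delta -> (forall s, In s (histories m) -> F s <= G s) -> Ex delta m F <= Ex delta m G.
Proof. intros Hd H. unfold Ex. apply lsum_le_in; intros s Hs. pose proof (weight_nonneg delta s Hd).
  specialize (H s Hs). nra. Qed.

Lemma Ex_scal delta m c F : Ex delta m (fun s => c * F s) = c * Ex delta m F.
Proof. unfold Ex. rewrite <- lsum_scal. apply lsum_ext_in; intros; ring. Qed.

Lemma Ex_plus delta m F G : Ex delta m (fun s => F s + G s) = Ex delta m F + Ex delta m G.
Proof. unfold Ex. rewrite <- lsum_plus. apply lsum_ext_in; intros; ring. Qed.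

Lemma deg_snoc s c i : deg (s ++ [c]) i = (deg s i + if Nat.eq_dec c i then 1 else 0)%nat.
Proof. unfold deg. rewrite count_occ_app. simpl. destruct (Nat.eq_dec c i); lia. Qed.

Lemma lsum_ind_eq x l : lsum (fun c => if Nat.eq_dec x c then 1 else 0) l = INR (count_occ Nat.eq_dec l x).
Proof. induction l; [reflexivity|]. rewrite lsum_cons, IHl. simpl.
  destruct (Nat.eq_dec x a), (Nat.eq_dec a x); try (subst; congruence); rewrite ?S_INR; ring. Qed.

Lemma sum_count s t : (forall x, In x s -> (x < t)%nat) ->
  lsum (fun c => INR (count_occ Nat.eq_dec s c)) (seq 0 t) = INR (length s).
Proof. induction s; intros H.
  - rewrite (lsum_ext_in _ (fun _ => 0)); [|intros; reflexivity]. rewrite lsum_const; simpl; ring.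
  - rewrite (lsum_ext_in _ (fun c => INR (count_occ Nat.eq_dec s c) + (if Nat.eq_dec a c then 1 else 0))).
    + rewrite lsum_plus, IHs, lsum_ind_eq. 
      * rewrite (proj1 (NoDup_count_occ' Nat.eq_dec _) (seq_NoDup t 0)). simpl length. rewrite !S_INR. simpl INR. ring.
        apply in_seq. assert (a < t)%nat by (apply H; simpl; auto). lia.
      * intros; apply H; simpl; auto.
    + intros c _. simpl. destruct (Nat.eq_dec a c); rewrite ?S_INR; ring.
Qed.

Lemma sum_deg s : valid s -> lsum (fun c => INR (deg s c)) (seq 0 (S (length s))) = 2 * INR (S (length s)).
Proof. intros Hv. unfold deg.
  rewrite (lsum_ext_in _ (fun c => INR (if Nat.eqb c 0 then 2 else 1) + INR (count_occ Nat.eq_dec s c))) by (intros; apply plus_INR).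
  rewrite lsum_plus, sum_count by exact Hv.
  replace (seq 0 (S (length s))) with (0%nat :: seq 1 (length s)) by reflexivity. rewrite lsum_cons.
  rewrite (lsum_ext_in _ (fun _ => 1)).
  - rewrite lsum_const, length_seq, S_INR. simpl. ring.
  - intros c Hc. apply in_seq in Hc. destruct c; [lia|]. reflexivity.
Qed.

Lemma lsum_affine_div (g : nat -> R) d D l :
  lsum (fun c => (g c + d) / D) l = (lsum g l + d * INR (length l)) / D.
Proof. induction l; [unfold lsum; simpl; unfold Rdiv; ring|]. rewrite !lsum_cons, IHl. simpl length. rewrite S_INR. unfold Rdiv; ring. Qed.

Lemma sumP delta s : -1 < delta -> valid s -> lsum (Pr delta s) (seq 0 (S (length s))) = 1.
Proof. intros Hd Hv. unfold Pr. rewrite lsum_affine_div, sum_deg by auto. rewrite length_seq.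
  pose proof (pos_INR (length s)). rewrite S_INR. field. split; lra. Qed.

Lemma length_filter_all (f : nat -> bool) l : (forall x, In x l -> f x = true) -> length (filter f l) = length l.
Proof. induction l; intros H; simpl; [reflexivity|]. rewrite H by (simpl; auto). simpl. f_equal. apply IHl. intros; apply H; simpl; auto. Qed.

Lemma Ngt_0 s : Ngt s 0 = S (length s).
Proof. unfold Ngt. rewrite length_filter_all, length_seq; [reflexivity|].
  intros x _. pose proof (deg_ge1 s x). apply Nat.ltb_lt. lia. Qed.

Lemma filter_split_len (g : nat -> nat) j l :
  length (filter (fun i => Nat.ltb j (g i)) l) =
  (length (filter (fun i => Nat.ltb (S j) (g i)) l) + length (filter (fun i => Nat.eqb (g i) (S j)) l))%nat.
Proof. induction l; simpl; [reflexivity|].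
  destruct (Nat.ltb_spec j (g a)), (Nat.ltb_spec (S j) (g a)), (Nat.eqb_spec (g a) (S j)); simpl; try lia. Qed.

Lemma Ngt_split s j : Ngt s j = (Ngt s (S j) + length (filter (fun i => Nat.eqb (deg s i) (S j)) (seq 0 (S (length s)))))%nat.
Proof. unfold Ngt. apply filter_split_len. Qed.

Lemma filter_bump (g h : nat -> nat) c j l :
  (forall i, h i = g i + if Nat.eq_dec c i then 1 else 0)%nat ->
  length (filter (fun i => Nat.ltb (S j) (h i)) l) =
  (length (filter (fun i => Nat.ltb (S j) (g i)) l) + count_occ Nat.eq_dec l c * (if Nat.eqb (g c) (S j) then 1 else 0))%nat.
Proof. intros Hh. induction l; simpl; [reflexivity|]. rewrite Hh.
  destruct (Nat.eq_dec c a), (Nat.eq_dec a c); try (subst; congruence).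
  - subst. destruct (Nat.ltb_spec (S j) (g a + 1)), (Nat.ltb_spec (S j) (g a)), (Nat.eqb_spec (g a) (S j)); simpl; try lia.
  - rewrite Nat.add_0_r. destruct (Nat.ltb_spec (S j) (g a)); simpl; lia.
Qed.

Lemma Ngt_snoc s c j : valid s -> (c < S (length s))%nat ->
  Ngt (s ++ [c]) (S j) = (Ngt s (S j) + if Nat.eqb (deg s c) (S j) then 1 else 0)%nat.
Proof. intros Hv Hc. unfold Ngt.
  replace (S (length (s ++ [c]))) with (S (S (length s)))%nat by (rewrite length_app; simpl; lia).
  rewrite seq_S, filter_app, length_app. simpl (0 + _)%nat.
  assert (Ht : Nat.ltb (S j) (deg (s ++ [c]) (S (length s))) = false).
  { apply Nat.ltb_ge. unfold deg. simpl (Nat.eqb _ 0).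
    rewrite (proj1 (count_occ_not_In _ _ _)). lia.
    intros Hin. apply in_app_or in Hin. destruct Hin as [Hin|[E|[]]]; [specialize (Hv _ Hin); lia| lia]. }
  simpl filter at 2. rewrite Ht. replace (length (@nil nat)) with 0%nat by reflexivity. rewrite Nat.add_0_r.
  rewrite (filter_bump (deg s) (deg (s ++ [c])) c j) by (intros; apply deg_snoc).
  rewrite (proj1 (NoDup_count_occ' Nat.eq_dec _) (seq_NoDup _ 0)) by (apply in_seq; lia). lia.
Qed.

Lemma sumP_ind delta s k l :
  lsum (fun c => Pr delta s c * (if Nat.eqb (deg s c) k then 1 else 0)) l =
  (INR k + delta) / ((2 + delta) * INR (S (length s))) * INR (length (filter (fun c => Nat.eqb (deg s c) k) l)).
Proof. induction l; [unfold lsum; simpl; ring|]. rewrite lsum_cons, IHl. cbn [filter].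
  destruct (Nat.eqb_spec (deg s a) k); cbn [length]; [rewrite (S_INR (length (filter _ l)))|]; unfold Pr; [subst|]; ring. Qed.

Lemma pgt_bounds delta k : -1 < delta -> 0 <= pgt delta k /\ pgt delta k * (INR k + 1) <= 1.
Proof. intros Hd. induction k; simpl pgt.
  - simpl; lra.
  - destruct IHk as [H1 H2]. pose proof (pos_INR k). rewrite S_INR.
    assert (0 < 3 + 2 * delta + INR k) by lra.
    assert (0 <= (1 + delta + INR k) / (3 + 2 * delta + INR k)) by (unfold Rdiv; apply Rmult_le_pos; [lra| left; apply Rinv_0_lt_compat; lra]).
    split; [nra|].
    replace (pgt delta k * ((1 + delta + INR k) / (3 + 2 * delta + INR k)) * (INR k + 1 + 1))
      with (pgt delta k * ((1 + delta + INR k) * (INR k + 2) / (3 + 2 * delta + INR k))) by (field; lra).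
    assert ((1 + delta + INR k) * (INR k + 2) / (3 + 2 * delta + INR k) <= INR k + 1).
    { apply Rdiv_le_l; [lra|]. nra. }
    nra.
Qed.

Lemma pgt_rec delta j : -1 < delta ->
  pgt delta (S j) = (INR (S j) + delta) / (2 + delta) * (pgt delta j - pgt delta (S j)).
Proof. intros Hd. simpl pgt. rewrite S_INR. pose proof (pos_INR j). field. split; lra. Qed.


Definition Y delta s k := INR (Ngt s k) - INR (S (length s)) * pgt delta k.
Definition aa delta t k := (INR k + delta) / ((2 + delta) * INR t).
Definition bb delta t k := match k with O => 0 | _ => if Rle_dec (aa delta t k) 1 then aa delta t k else 0 end.
Definition ff delta t k := match k with O => 1 | _ => if Rle_dec (aa delta t k) 1 then 1 else 1 + / INR t end.

Lemma Y_snoc delta s c j : valid s -> (c < S (length s))%nat ->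
  Y delta (s ++ [c]) (S j) = Y delta s (S j) + ((if Nat.eqb (deg s c) (S j) then 1 else 0) - pgt delta (S j)).
Proof. intros Hv Hc. unfold Y. rewrite Ngt_snoc by auto. rewrite plus_INR, length_app.
  replace (S (length s + length [c])) with (S (S (length s))) by (simpl; lia).
  rewrite (S_INR (S (length s))). destruct (Nat.eqb (deg s c) (S j)); simpl INR; ring. Qed.

Lemma Y_0 delta s : Y delta s 0 = 0.
Proof. unfold Y. rewrite Ngt_0. simpl pgt. ring. Qed.

Lemma filter_none (f : nat -> bool) l : (forall x, In x l -> f x = false) -> length (filter f l) = O.
Proof. induction l; intros H; simpl; [reflexivity|]. rewrite H by (simpl; auto). apply IHl. intros; apply H; simpl; auto. Qed.

Lemma step_k delta s j th : -1 < delta -> valid s -> - / 2 <= th <= / 2 ->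
  let t := S (length s) in
  lsum (fun c => Pr delta s c * exp (th * Y delta (s ++ [c]) (S j))) (seq 0 t) <=
  exp (4 * th * th) * ((1 - bb delta t (S j)) * ff delta t (S j) * exp (th * Y delta s (S j))
                        + bb delta t (S j) * exp (th * Y delta s j)).
Proof.
  intros Hd Hv Hth t.
  set (d := fun c => (if Nat.eqb (deg s c) (S j) then 1 else 0) - pgt delta (S j)).
  set (y := Y delta s (S j)).
  rewrite (lsum_ext_in _ (fun c => exp (th * y) * (Pr delta s c * exp (th * d c)))).
  2:{ intros c Hc. apply in_seq in Hc. rewrite Y_snoc by (auto; lia). fold y. unfold d.
      rewrite Rmult_plus_distr_l, exp_plus. ring. }
  rewrite lsum_scal.
  destruct (pgt_bounds delta (S j) Hd) as [Hp1 Hp2].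
  pose proof (pos_INR (S j)) as HSj.
  assert (Hp3 : pgt delta (S j) <= 1) by nra.
  assert (Hn := noise (Pr delta s) d (seq 0 t) th).
  assert (Hmu : lsum (fun c => Pr delta s c * d c) (seq 0 t) =
     aa delta t (S j) * INR (length (filter (fun c => Nat.eqb (deg s c) (S j)) (seq 0 t))) - pgt delta (S j)).
  { unfold d. rewrite (lsum_ext_in _ (fun c => Pr delta s c * (if Nat.eqb (deg s c) (S j) then 1 else 0) + (- pgt delta (S j)) * Pr delta s c)) by (intros; ring).
    rewrite lsum_plus, lsum_scal, sumP_ind, sumP by auto. unfold aa, t. ring. }
  rewrite Hmu in Hn.
  assert (Hn' : lsum (fun c => Pr delta s c * exp (th * d c)) (seq 0 t) <=
     exp (4 * th * th) * exp (th * (aa delta t (S j) * INR (length (filter (fun c => Nat.eqb (deg s c) (S j)) (seq 0 t))) - pgt delta (S j)))).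
  { apply Hn.
    - intros; left; apply Pr_pos; auto.
    - apply sumP; auto.
    - intros c _. unfold d. destruct (Nat.eqb (deg s c) (S j)); lra.
    - apply Rabs_le; lra. }
  clear Hn Hmu.
  set (Nk := INR (length (filter (fun c => Nat.eqb (deg s c) (S j)) (seq 0 t)))) in *.
  pose proof (exp_pos (th * y)) as Hey.
  pose proof (exp_pos (4 * th * th)) as He4.
  assert (Ht1 : 1 <= INR t) by (unfold t; rewrite S_INR; pose proof (pos_INR (length s)); lra).
  assert (HSj1 : 1 <= INR (S j)) by (rewrite S_INR; pose proof (pos_INR j); lra).
  assert (Hapos : 0 < aa delta t (S j)) by (unfold aa; apply Rdiv_lt_0_compat; [lra| apply Rmult_lt_0_compat; lra]).
  unfold bb, ff.
  destruct (Rle_dec (aa delta t (S j)) 1) as [Ha|Ha].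
  -
    assert (Hid : y + (aa delta t (S j) * Nk - pgt delta (S j)) =
                  (1 - aa delta t (S j)) * y + aa delta t (S j) * Y delta s j).
    { unfold y, Y, Nk. rewrite (Ngt_split s j), plus_INR. fold t.
      assert (Hz : aa delta t (S j) * INR t * (pgt delta j - pgt delta (S j)) - pgt delta (S j) = 0).
      { unfold aa. replace ((INR (S j) + delta) / ((2 + delta) * INR t) * INR t) with ((INR (S j) + delta) / (2 + delta)) by (field; split; lra).
        rewrite <- (pgt_rec delta j Hd). ring. }
      set (A := aa delta t (S j)) in *. set (P := pgt delta (S j)) in *. set (Q := pgt delta j) in *.
      set (M := INR (length (filter (fun c : nat => deg s c =? S j) (seq 0 t)))).
      set (W := INR (Ngt s (S j))). nra. }
    eapply Rle_trans. { apply Rmult_le_compat_l; [left; exact Hey| exact Hn']. }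
    rewrite <- Rmult_assoc, (Rmult_comm (exp (th * y))), Rmult_assoc, <- exp_plus.
    apply Rmult_le_compat_l; [lra|].
    replace (th * y + th * (aa delta t (S j) * Nk - pgt delta (S j))) with
      ((1 - aa delta t (S j)) * (th * y) + aa delta t (S j) * (th * Y delta s j)) by (rewrite <- Rmult_plus_distr_l, Hid; ring).
    rewrite Rmult_1_r. apply exp_convex. lra.
  - (* no node of degree S j *)
    apply Rnot_le_lt in Ha.
    assert (HSj2 : INR (S j) > INR t + 1).
    { unfold aa in Ha. apply Rlt_gt. 
      assert (INR (S j) + delta > (2 + delta) * INR t).
      { apply Rnot_le_lt; intro Hc. apply (Rlt_irrefl 1). eapply Rlt_le_trans; [exact Ha|].
        apply Rdiv_le_l; nra. }
      nra. }
    assert (HNk : Nk = 0).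
    { unfold Nk. rewrite filter_none; [reflexivity|]. intros c _. apply Nat.eqb_neq.
      pose proof (deg_le s c). intro E. 
      replace (INR t + 1) with (INR (t + 1)) in HSj2 by (rewrite plus_INR; reflexivity).
      apply Rgt_lt, INR_lt in HSj2. unfold t in HSj2. lia. }
    rewrite HNk, Rmult_0_r, Rminus_0_l in Hn'.
    eapply Rle_trans. { apply Rmult_le_compat_l; [left; exact Hey| exact Hn']. }
    rewrite Rmult_0_l, Rplus_0_r, Rminus_0_r, Rmult_1_l.
    assert (exp (th * - pgt delta (S j)) <= 1 + / INR t).
    { assert (Hq : th * - pgt delta (S j) <= / (2 * INR t)).
      { assert (pgt delta (S j) <= / INR t).
        { apply (Rmult_le_reg_r (INR (S j) + 1)); [lra|]. eapply Rle_trans; [exact Hp2|].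
          apply (Rmult_le_reg_l (INR t)); [lra|]. rewrite <- Rmult_assoc, Rinv_r by lra. nra. }
        assert (0 < / INR t) by (apply Rinv_0_lt_compat; lra).
        rewrite Rinv_mult. nra. }
      eapply Rle_trans; [apply exp_mono, Hq|]. eapply Rle_trans; [apply exp_lin|].
      - split; [left; apply Rinv_0_lt_compat; lra|]. rewrite Rinv_mult.
        assert (/ INR t <= 1) by (rewrite <- Rinv_1; apply Rinv_le_contravar; lra). lra.
      - rewrite Rinv_mult. lra. }
    set (ep := exp (th * - pgt delta (S j))) in *. set (ey := exp (th * y)) in *. set (e4 := exp (4 * th * th)) in *.
    replace (ey * (e4 * ep)) with ((ey * e4) * ep) by ring.
    replace (e4 * ((1 + / INR t) * ey)) with ((ey * e4) * (1 + / INR t)) by ring.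
    apply Rmult_le_compat_l; [nra|lra].
Qed.


Lemma abstract_sum (u b f H : nat -> R) g eps K :
  0 <= g -> (forall k, 0 <= u k) -> b O = 0 -> f O = 1 ->
  (forall k, (1 - b k) * f k <= 1 + eps) ->
  (forall k, (1 - b k) * f k + b (S k) <= 1 + eps) ->
  H O <= g * u O ->
  (forall j, H (S j) <= g * ((1 - b (S j)) * f (S j) * u (S j) + b (S j) * u j)) ->
  lsum H (seq 0 (S K)) <= g * (1 + eps) * lsum u (seq 0 (S K)).
Proof.
  intros Hg Hu Hb0 Hf0 Hc1 Hc2 HH0 HHS.
  assert (Inv : forall K, lsum H (seq 0 (S K)) <= g * ((1 + eps) * lsum u (seq 0 K) + (1 - b K) * f K * u K)).
  { induction K0.
    - simpl. unfold lsum; simpl. rewrite Hb0, Hf0. lra.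
    - rewrite (seq_S (S K0)), lsum_app, lsum_cons, lsum_nil. simpl (0 + _)%nat.
      replace (lsum u (seq 0 (S K0))) with (lsum u (seq 0 K0) + u K0) by (rewrite seq_S, lsum_app, lsum_cons, lsum_nil; simpl; ring).
      specialize (HHS K0). specialize (Hc2 K0). pose proof (Hu K0). pose proof (Hu (S K0)).
      assert ((1 - b K0) * f K0 * u K0 + b (S K0) * u K0 <= (1 + eps) * u K0) by nra.
      nra. }
  specialize (Inv K).
  replace (lsum u (seq 0 (S K))) with (lsum u (seq 0 K) + u K) by (rewrite seq_S, lsum_app, lsum_cons, lsum_nil; simpl; ring).
  specialize (Hc1 K). pose proof (Hu K).
  assert ((1 - b K) * f K * u K <= (1 + eps) * u K) by nra. nra.
Qed.

Definition G delta th K s := lsum (fun k => exp (th * Y delta s k)) (seq 0 (S K)).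

Lemma aa_S delta t k : 0 < INR t -> -1 < delta -> aa delta t (S k) = aa delta t k + / ((2 + delta) * INR t).
Proof. intros. unfold aa. rewrite S_INR. field. split; lra. Qed.

Lemma coef1 delta t k : -1 < delta -> 1 <= INR t -> (1 - bb delta t k) * ff delta t k <= 1 + / INR t.
Proof. intros Hd Ht. assert (0 < / INR t) by (apply Rinv_0_lt_compat; lra).
  destruct k; simpl; [lra|]. 
  assert (0 < aa delta t (S k)). { unfold aa. rewrite S_INR. pose proof (pos_INR k). apply Rdiv_lt_0_compat; nra. }
  destruct (Rle_dec (aa delta t (S k)) 1); lra. Qed.

Lemma coef2 delta t k : -1 < delta -> 1 <= INR t -> (1 - bb delta t k) * ff delta t k + bb delta t (S k) <= 1 + / INR t.
Proof. intros Hd Ht. assert (0 < / INR t) by (apply Rinv_0_lt_compat; lra).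
  assert (Hstep : / ((2 + delta) * INR t) <= / INR t).
  { apply Rinv_le_contravar; [lra|]. nra. }
  assert (Hs0 : 0 < / ((2 + delta) * INR t)) by (apply Rinv_0_lt_compat; nra).
  pose proof (aa_S delta t k ltac:(lra) Hd) as HS.
  destruct k.
  - simpl bb at 1; simpl ff. unfold bb. 
    assert (aa delta t 1 <= / INR t).
    { unfold aa. simpl INR. apply Rdiv_le_l; [nra|]. rewrite Rmult_comm, Rmult_assoc, Rinv_r by lra. lra. }
    assert (0 < aa delta t 1) by (unfold aa; simpl INR; apply Rdiv_lt_0_compat; nra).
    destruct (Rle_dec (aa delta t 1) 1); lra.
  - assert (0 < aa delta t (S k)). { unfold aa. rewrite S_INR. pose proof (pos_INR k). apply Rdiv_lt_0_compat; nra. }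
    unfold bb, ff.
    destruct (Rle_dec (aa delta t (S k)) 1), (Rle_dec (aa delta t (S (S k))) 1); lra.
Qed.

Lemma G_step delta s th K : -1 < delta -> valid s -> - / 2 <= th <= / 2 ->
  lsum (fun c => Pr delta s c * G delta th K (s ++ [c])) (seq 0 (S (length s))) <=
  exp (4 * th * th) * (1 + / INR (S (length s))) * G delta th K s.
Proof.
  intros Hd Hv Hth. unfold G. rewrite lsum_swap.
  set (t := S (length s)).
  assert (Ht : 1 <= INR t) by (unfold t; rewrite S_INR; pose proof (pos_INR (length s)); lra).
  apply (abstract_sum (fun k => exp (th * Y delta s k)) (bb delta t) (ff delta t)).
  - left; apply exp_pos.
  - intros; left; apply exp_pos.
  - reflexivity.
  - reflexivity.
  - intros; apply coef1; auto.
  - intros; apply coef2; auto.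
  - rewrite (lsum_ext_in _ (fun c => Pr delta s c)) by (intros; rewrite Y_0, Rmult_0_r, exp_0; ring).
    unfold t. rewrite sumP by auto. rewrite Y_0, Rmult_0_r, exp_0.
    pose proof (exp_ineq1_le (4 * th * th)). nra.
  - intros j. apply step_k; auto.
Qed.


Lemma Ex_G delta th K m : -1 < delta -> - / 2 <= th <= / 2 ->
  Ex delta m (G delta th K) <= G delta th K [] * INR (S m) * exp (4 * th * th * INR m).
Proof.
  intros Hd Hth. induction m.
  - unfold Ex. simpl histories. rewrite lsum_cons, lsum_nil. unfold weight. simpl wt_aux. simpl INR.
    rewrite Rmult_0_r, exp_0. lra.
  - rewrite Ex_step.
    eapply Rle_trans.
    { apply (Ex_mono delta m _ (fun s => exp (4 * th * th) * (1 + / INR (S m)) * G delta th K s)); auto.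
      intros s Hs. destruct (hist_valid m s Hs) as [Hl Hv]. rewrite <- Hl. apply G_step; auto. }
    rewrite Ex_scal.
    assert (0 <= exp (4 * th * th) * (1 + / INR (S m))).
    { pose proof (exp_pos (4 * th * th)). assert (0 < / INR (S m)) by (apply Rinv_0_lt_compat; rewrite S_INR; pose proof (pos_INR m); lra). nra. }
    eapply Rle_trans; [apply Rmult_le_compat_l; [exact H| exact IHm]|].
    right. rewrite (S_INR (S m)), (S_INR m). 
    replace (4 * th * th * (INR m + 1)) with (4 * th * th + 4 * th * th * INR m) by ring.
    rewrite exp_plus. pose proof (pos_INR m). field. lra.
Qed.

Lemma G_nil_bound delta th K : -1 < delta -> - / 2 <= th <= / 2 -> G delta th K [] <= 2 * INR (S K).
Proof.
  intros Hd Hth. unfold G. replace (2 * INR (S K)) with (lsum (fun _ => 2) (seq 0 (S K))) by (rewrite lsum_const, length_seq; ring).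
  apply lsum_le_in. intros k _.
  destruct (pgt_bounds delta k Hd) as [Hp1 Hp2]. pose proof (pos_INR k).
  assert (pgt delta k <= 1) by nra.
  assert (Hn : (Ngt [] k <= 1)%nat).
  { unfold Ngt. simpl. destruct (k <? deg [] 0); simpl; lia. }
  apply le_INR in Hn. pose proof (pos_INR (Ngt [] k)). simpl (INR 1) in Hn.
  eapply Rle_trans; [apply exp_mono with (y := /2)|].
  - unfold Y. simpl length. simpl (INR 1). nra.
  - eapply Rle_trans; [apply exp_lin; lra| lra].
Qed.

Lemma event_bound delta s n lam x : -1 < delta -> length s = n -> 0 <= lam -> 8 <= x ->
  (exists k : nat, Rabs (INR (Ngt s k) - INR (S n) * pgt delta k) >= x) ->
  exp (lam * x) <= G delta lam (S n) s + G delta (- lam) (S n) s.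
Proof.
  intros Hd Hl Hlam Hx [k Hk].
  assert (Hg1 : 0 <= G delta lam (S n) s) by (apply lsum_nonneg; intros; left; apply exp_pos).
  assert (Hg2 : 0 <= G delta (- lam) (S n) s) by (apply lsum_nonneg; intros; left; apply exp_pos).
  assert (HkK : (k <= S n)%nat).
  { destruct (le_lt_dec k (S n)) as [h|h]; [exact h|]. exfalso.
    assert (Ngt s k = 0%nat).
    { unfold Ngt. apply filter_none. intros i _. apply Nat.ltb_ge. pose proof (deg_le s i). lia. }
    rewrite H in Hk. destruct (pgt_bounds delta k Hd) as [Hp1 Hp2].
    assert (INR (S n) <= INR k + 1) by (rewrite <- S_INR; apply le_INR; lia).
    pose proof (pos_INR (S n)). change (INR 0) with 0 in Hk.
    set (N := INR (S n)) in *. assert (N * pgt delta k <= 1) by nra.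
    rewrite Rabs_left1 in Hk; nra. }
  assert (Hin : In k (seq 0 (S (S n)))) by (apply in_seq; lia).
  assert (Y delta s k = INR (Ngt s k) - INR (S n) * pgt delta k) by (unfold Y; rewrite Hl; reflexivity).
  pose proof (lsum_term_le (fun k => exp (lam * Y delta s k)) _ k ltac:(intros; left; apply exp_pos) Hin) as T1.
  pose proof (lsum_term_le (fun k => exp (- lam * Y delta s k)) _ k ltac:(intros; left; apply exp_pos) Hin) as T2.
  cbv beta in T1, T2. fold (G delta lam (S n) s) in T1. fold (G delta (- lam) (S n) s) in T2.
  rewrite <- H in Hk.
  destruct (Rle_dec 0 (Y delta s k)).
  - rewrite Rabs_pos_eq in Hk by auto. assert (exp (lam * x) <= exp (lam * Y delta s k)) by (apply exp_mono, Rmult_le_compat_l; [lra| apply Rge_le; exact Hk]). lra.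
  - rewrite Rabs_left1 in Hk by lra. assert (exp (lam * x) <= exp (- lam * Y delta s k)) by (apply exp_mono; replace (- lam * Y delta s k) with (lam * - Y delta s k) by ring; apply Rmult_le_compat_l; lra). lra.
Qed.


Lemma bound_n delta n : -1 < delta ->
  0 <= probA delta (S n) (fun s =>
        exists k : nat,
          Rabs (INR (Ngt s k) - INR (S n) * pgt delta k)
            >= 8 * (1 + sqrt (INR (S n) * ln (INR (S n))))) <= 8 / INR (S n).
Proof.
  intros Hd.
  set (N := INR (S n)).
  assert (HN : 1 <= N) by (unfold N; rewrite S_INR; pose proof (pos_INR n); lra).
  set (L := ln N).
  assert (HL0 : 0 <= L).
  { unfold L. destruct (Req_dec N 1) as [E|E]; [rewrite E, ln_1; lra|].
    left. rewrite <- ln_1. apply ln_increasing; lra. }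
  assert (HLN : L < N).
  { unfold L. pose proof (exp_ineq1_le N). rewrite <- (ln_exp N) at 2. apply ln_increasing; lra. }
  set (r := sqrt (L / N)).
  assert (HLN0 : 0 <= L / N) by (unfold Rdiv; apply Rmult_le_pos; [lra| left; apply Rinv_0_lt_compat; lra]).
  assert (Hr2 : r * r = L / N) by (apply sqrt_sqrt; auto).
  assert (Hr0 : 0 <= r) by apply sqrt_pos.
  assert (HrN : N * (r * r) = L) by (rewrite Hr2; field; lra).
  assert (Hr1 : r <= 1). { assert (L / N <= 1) by (apply Rdiv_le_l; lra). nra. }
  set (lam := r / 2).
  set (x := 8 * (1 + sqrt (N * L))).
  assert (Hsq : sqrt (N * L) = N * r).
  { rewrite <- HrN. replace (N * (N * (r * r))) with ((N * r) * (N * r)) by ring. apply sqrt_square. nra. }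
  assert (Hx8 : 8 <= x) by (unfold x; pose proof (sqrt_pos (N * L)); lra).
  assert (Hlam : 0 <= lam <= /2) by (unfold lam; lra).
  unfold probA. replace (S n - 1)%nat with n by lia.
  fold N. fold L. fold x.
  split.
  { apply lsum_nonneg. intros s _. destruct (excluded_middle_informative _); [apply weight_nonneg; auto| lra]. }
  eapply Rle_trans.
  { apply (lsum_le_in _ (fun s => weight delta s * ((G delta lam (S n) s + G delta (- lam) (S n) s) / exp (lam * x)))).
    intros s Hs. destruct (hist_valid n s Hs) as [Hl Hv].
    pose proof (weight_nonneg delta s Hd) as Hw.
    assert (0 <= G delta lam (S n) s) by (apply lsum_nonneg; intros; left; apply exp_pos).
    assert (0 <= G delta (- lam) (S n) s) by (apply lsum_nonneg; intros; left; apply exp_pos).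
    pose proof (exp_pos (lam * x)).
    destruct (excluded_middle_informative _) as [He|He].
    - assert (exp (lam * x) <= G delta lam (S n) s + G delta (- lam) (S n) s)
        by (apply event_bound with (delta := delta) (n := n); auto; lra).
      assert (1 <= (G delta lam (S n) s + G delta (- lam) (S n) s) / exp (lam * x)).
      { unfold Rdiv. apply (Rmult_le_reg_r (exp (lam * x))); auto. rewrite Rmult_assoc, Rinv_l by lra. lra. }
      nra.
    - apply Rmult_le_pos; auto. unfold Rdiv. apply Rmult_le_pos; [lra| left; apply Rinv_0_lt_compat; auto]. }
  change (lsum (fun s => weight delta s * ((G delta lam (S n) s + G delta (- lam) (S n) s) / exp (lam * x))) (histories n))
    with (Ex delta n (fun s => (G delta lam (S n) s + G delta (- lam) (S n) s) / exp (lam * x))).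
  set (E := exp (lam * x)).
  assert (HE : 0 < E) by apply exp_pos.
  replace (Ex delta n (fun s => (G delta lam (S n) s + G delta (- lam) (S n) s) / E))
    with (/ E * (Ex delta n (G delta lam (S n)) + Ex delta n (G delta (- lam) (S n)))).
  2:{ rewrite <- Ex_plus, <- Ex_scal. unfold Ex. apply lsum_ext_in; intros. unfold Rdiv; ring. }
  assert (Hb : forall th, - / 2 <= th <= / 2 -> Ex delta n (G delta th (S n)) <= 2 * (N + 1) * N * exp (4 * th * th * N)).
  { intros th Hth. eapply Rle_trans; [apply Ex_G; auto|].
    pose proof (G_nil_bound delta th (S n) Hd Hth). fold N.
    replace (INR (S (S n))) with (N + 1) in H by (unfold N; rewrite (S_INR (S n)); reflexivity).
    assert (exp (4 * th * th * INR n) <= exp (4 * th * th * N)).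
    { apply exp_mono. unfold N. rewrite S_INR. assert (0 <= th * th) by nra. nra. }
    assert (0 <= G delta th (S n) []) by (apply lsum_nonneg; intros; left; apply exp_pos).
    pose proof (exp_pos (4 * th * th * INR n)).
    assert (G delta th (S n) [] * N <= 2 * (N + 1) * N) by nra.
    assert (0 <= G delta th (S n) [] * N) by nra.
    nra. }
  pose proof (Hb lam ltac:(lra)) as B1. pose proof (Hb (- lam) ltac:(lra)) as B2.
  assert (HexpN : exp (4 * lam * lam * N) = N).
  { replace (4 * lam * lam * N) with L by (unfold lam; rewrite <- HrN; field). unfold L. apply exp_ln; lra. }
  replace (4 * - lam * - lam * N) with (4 * lam * lam * N) in B2 by ring.
  rewrite HexpN in B1, B2.
  assert (HE4 : N * N * N * N <= E).
  { unfold E. assert (4 * L <= lam * x).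
    { unfold lam, x. rewrite Hsq. assert (0 <= r) by auto. nra. }
    eapply Rle_trans; [|apply exp_mono; exact H].
    replace (4 * L) with (L + L + L + L) by ring. rewrite !exp_plus. unfold L. rewrite exp_ln by lra. lra. }
  assert (0 < / E) by (apply Rinv_0_lt_compat; auto).
  eapply Rle_trans.
  { apply Rmult_le_compat_l; [lra|]. apply Rplus_le_compat; [exact B1| exact B2]. }
  apply (Rmult_le_reg_r E); auto.
  replace (/ E * (2 * (N + 1) * N * N + 2 * (N + 1) * N * N) * E) with (4 * (N + 1) * N * N) by (field; lra).
  apply (Rmult_le_reg_l N); [lra|].
  replace (N * (8 / N * E)) with (8 * E) by (field; lra).
  assert (N * N * N * N * 8 <= 8 * E) by lra.
  assert (N * (4 * (N + 1) * N * N) <= N * N * N * N * 8).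
  { assert (0 <= N * N * N) by (apply Rmult_le_pos; [nra|lra]). nra. }
  lra.
Qed.

Theorem mainTheorem6 (delta : R) (hdelta : -1 < delta) :
  exists C : R, 0 < C /\
    Un_cv (fun n : nat =>
      probA delta (S n) (fun s =>
        exists k : nat,
          Rabs (INR (Ngt s k) - INR (S n) * pgt delta k)
            >= C * (1 + sqrt (INR (S n) * ln (INR (S n))))))
      0.
Proof.
  exists 8. split; [lra|].
  intros eps Heps.
  destruct (INR_archimed eps 8 Heps) as [M HM].
  exists M. intros n Hn. unfold R_dist. rewrite Rminus_0_r.
  destruct (bound_n delta n hdelta) as [H0 H1].
  rewrite Rabs_pos_eq by auto.
  eapply Rle_lt_trans; [exact H1|].
  assert (INR M <= INR (S n)) by (apply le_INR; lia).
  assert (0 < INR (S n)) by (rewrite S_INR; pose proof (pos_INR n); lra).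
  apply (Rmult_lt_reg_r (INR (S n))); auto.
  unfold Rdiv. rewrite Rmult_assoc, Rinv_l by lra. nra.
Qed.
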